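(* Let $k\ge1$, $D_k=3k^2+3k+1$, and let $c\in P_k$. Let $\Delta=c+V(T_{D_k})=\{c+a\alpha_1+b\alpha_2 : 0\le b\le a\le D_k\}$. Then exactly $3k$ points of $P_k$ lie outside $\Delta$ and are at distance at most $k$ in $T_\infty$ from some vertex of $\Delta$.
   Context: Let $\alpha_1=(1,0)$ and $\alpha_2=(-\tfrac12,\tfrac{\sqrt3}{2})$. The triangular lattice $T_\infty$ is the infinite graph with vertex set $\{a\alpha_1+b\alpha_2 : a,b\in\mathbb Z\}$, two vertices being adjacent iff their Euclidean distance is $1$; distances are graph distances. For $d\ge0$, $T_d$ is the subgraph of $T_\infty$ induced by the vertices $a\alpha_1+b\alpha_2$ with $0\le b\le a\le d$. For $k\ge 1$, let $D_k=3k^2+3k+1$ and let $P_k$ (the pattern $P_{k+1,1}$) be the sublattice $\{x\,u+y\,v : x,y\in\mathbb Z\}$, where $u=(2k+1)\alpha_1+k\alpha_2$ and $v=(k+1)\alpha_1+(2k+1)\alpha_2$. *)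

(* Defs.v *)
From mathcomp Require Import all_boot all_order all_algebra.
Set Implicit Arguments. Unset Strict Implicit. Unset Printing Implicit Defensive.
Import Order.TTheory GRing.Theory Num.Theory.
Local Open Scope ring_scope.

(* A vertex a*alpha1 + b*alpha2 of the triangular lattice T_infty is encoded
   by its integer coordinates (a, b) : int * int (alpha1, alpha2 are linearly
   independent, so this is a bijection). *)
Definition vtx := (int * int)%type.

Definition vadd (p q : vtx) : vtx := (p.1 + q.1, p.2 + q.2).

(* Adjacency in T_infty: Euclidean distance 1.  The lattice vectors of norm 1
   are exactly +-alpha1, +-alpha2, +-(alpha1+alpha2). *)
Definition adjT (p q : vtx) : bool :=
  (q.1 - p.1, q.2 - p.2) \in
    ([:: (1, 0); (0, 1); (1, 1); (-1, 0); (0, -1); (-1, -1)] : seq vtx).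

Definition distT_le (p q : vtx) (n : nat) : Prop :=
  exists s : seq vtx, (size s <= n)%N /\ path adjT p s /\ last p s = q.

Definition Dk (k : nat) : nat := 3 * k ^ 2 + 3 * k + 1.

(* The pattern P_k = { x u + y v } with u = (2k+1) alpha1 + k alpha2 and
   v = (k+1) alpha1 + (2k+1) alpha2. *)
Definition inP (k : nat) (p : vtx) : Prop :=
  exists x y : int,
    p = (x * (2 * k + 1)%:R + y * (k + 1)%:R, x * k%:R + y * (2 * k + 1)%:R).

Definition inDelta (k : nat) (c p : vtx) : Prop :=
  exists a b : nat, (b <= a)%N /\ (a <= Dk k)%N /\ p = vadd c (a%:Z, b%:Z).

(* Main.v *)
Require Import Defs.
From mathcomp Require Import all_boot all_order all_algebra zify.
Import Order.TTheory GRing.Theory Num.Theory.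
Local Open Scope ring_scope.

Definition near (n : int) (d : vtx) : Prop :=
  -n <= d.1 <= n /\ -n <= d.2 <= n /\ -n <= d.1 - d.2 <= n.

Lemma adj_near (p q : vtx) : adjT p q -> near 1 (q.1 - p.1, q.2 - p.2).
Proof.
rewrite /adjT /near !inE !xpair_eqE /=.
move=> H; repeat (case/orP: H => H); case/andP: H => /eqP H1 /eqP H2; lia.
Qed.

Lemma path_near (q : vtx) (s : seq vtx) :
  path adjT q s -> near (size s)%:Z ((last q s).1 - q.1, (last q s).2 - q.2).
Proof.
elim: s q => [|x s IH] q /=.
  move=> _; rewrite /near /=; lia.
case/andP=> /adj_near Hx /IH; rewrite /near /= in Hx *; lia.
Qed.

Lemma adj_step (q e : vtx) : e \in ([:: (1, 0); (0, 1); (1, 1); (-1, 0); (0, -1); (-1, -1)] : seq vtx) ->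
  adjT q (vadd q e).
Proof.
rewrite /adjT /vadd /=.
have -> : (q.1 + e.1 - q.1, q.2 + e.2 - q.2) = e by case: e => a b /=; congr (_, _); lia.
done.
Qed.

Lemma near_path (n : nat) (q d : vtx) : near n%:Z d ->
  exists s, (size s <= n)%N /\ path adjT q s /\ last q s = vadd q d.
Proof.
elim: n q d => [|n IH] q [x y]; rewrite /near /=.
  move=> H; exists [::]; split => //; split => //=.
  rewrite /vadd /=. have -> : x = 0 by lia. have -> : y = 0 by lia. by rewrite !addr0 -surjective_pairing.
move=> H.
have [Hz|Hnz] : (x == 0) && (y == 0) \/ ~~ ((x == 0) && (y == 0)) by case: ((x == 0) && (y == 0)); [left|right].
  case/andP: Hz => /eqP -> /eqP ->; exists [::]; split => //; split => //=.
  by rewrite /vadd /= !addr0 -surjective_pairing.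
suff [e [He Hn]] : exists e : vtx, e \in ([:: (1, 0); (0, 1); (1, 1); (-1, 0); (0, -1); (-1, -1)] : seq vtx)
   /\ near n%:Z (x - e.1, y - e.2).
  have [s [H1 [H2 H3]]] := IH (vadd q e) _ Hn.
  exists (vadd q e :: s); split => //; split; first by rewrite /= adj_step.
  rewrite /= H3 /vadd /=; congr (_, _); lia.
rewrite /near /=.
case: (ltrgtP x 0) => hx; case: (ltrgtP y 0) => hy.
- exists (-1, -1); split; [by rewrite !inE | simpl; lia].
- exists (-1, 0); split; [by rewrite !inE | simpl; lia].
- exists (-1, 0); split; [by rewrite !inE | simpl; lia].
- exists (1, 0); split; [by rewrite !inE | simpl; lia].
- exists (1, 1); split; [by rewrite !inE | simpl; lia].
- exists (1, 0); split; [by rewrite !inE | simpl; lia].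
- exists (0, -1); split; [by rewrite !inE | simpl; lia].
- exists (0, 1); split; [by rewrite !inE | simpl; lia].
- by rewrite hx hy eqxx in Hnz.
Qed.
Lemma zero_mul (m D : int) : 0 < D -> - D < D * m < D -> m = 0.
Proof. move=> HD H. case: (ltrgtP m 0) => Hm //; nia. Qed.

Lemma case1 (K a b t : int) : 1 <= K -> a + (3*K+1)*b = t * (3*K*K+3*K+1) ->
  -K <= b -> b < 0 -> -K <= a <= 3*K*K+3*K+1+K -> a = (-b)*(3*K+1).
Proof.
move=> HK E Hb1 Hb2 Ha.
have : t = 0.
  apply: (@zero_mul t (3*K*K+3*K+1)); nia.
move=> Ht; rewrite Ht in E; lia.
Qed.

Lemma case2 (K a b t : int) : 1 <= K -> a + (3*K+1)*b = t * (3*K*K+3*K+1) ->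
  0 <= b <= 3*K*K+3*K+1+K -> 3*K*K+3*K+1 < a <= 3*K*K+3*K+1+K ->
  b = (a - (3*K*K+3*K+1)) * (3*K+2).
Proof.
move=> HK E Hb Ha.
set D := 3*K*K+3*K+1 in E Hb Ha *.
set j := a - D.
have Em : b - j*(3*K+2) = D * (3*b - (t-1)*(3*K+2)).
  rewrite /j /D; nia.
have : 3*b - (t-1)*(3*K+2) = 0.
  apply: (@zero_mul _ D); rewrite /D /j in Em *; nia.
move=> H0; rewrite H0 mulr0 in Em; lia.
Qed.

Lemma case3 (K a b t : int) : 1 <= K -> a + (3*K+1)*b = t * (3*K*K+3*K+1) ->
  a <= 3*K*K+3*K+1 -> -K <= a -> 1 <= b - a <= K ->
  a = 3*K*K+3*K+1 - (b-a) * (3*K+2).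
Proof.
move=> HK E Hb Ha Hi.
set D := 3*K*K+3*K+1 in E Hb *.
set i := b - a.
have Em : a - D + (3*K+2)*i = D * (3*a + 3*i - t*(3*K+1) - 1).
  rewrite /i /D; nia.
have : 3*a + 3*i - t*(3*K+1) - 1 = 0.
  apply: (@zero_mul _ D); rewrite /D /i in Em *; nia.
move=> H0; rewrite H0 mulr0 in Em; lia.
Qed.

Section Core.
Variable k : nat.
Hypothesis hk : (1 <= k)%N.
Let K : int := k%:Z.
Let D : int := 3*K*K+3*K+1.

Definition tri (d : vtx) : Prop := 0 <= d.2 /\ d.2 <= d.1 /\ d.1 <= D.
Definition f1 (j : int) : vtx := (j*(3*K+1), -j).
Definition f2 (j : int) : vtx := (D + j, j*(3*K+2)).
Definition f3 (j : int) : vtx := (D - j*(3*K+2), D - j*(3*K+1)).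
Definition s0 : seq vtx := [seq f1 j%:Z | j <- iota 1 k] ++ [seq f2 j%:Z | j <- iota 1 k]
  ++ [seq f3 j%:Z | j <- iota 1 k].

Lemma mem_s0 d : d \in s0 <-> exists j : nat, (1 <= j <= k)%N /\ (d = f1 j \/ d = f2 j \/ d = f3 j).
Proof.
rewrite /s0 !mem_cat; split.
  case/orP => [|/orP []] /mapP [j]; rewrite mem_iota => Hj ->; exists j;
   (split; [lia | tauto]).
case=> j [Hj [|[|]] ->]; apply/orP; [left | right; apply/orP; left | right; apply/orP; right];
  apply: map_f; rewrite mem_iota; lia.
Qed.

Lemma core d : d \in s0 <->
  ((exists t : int, d.1 + (3*K+1) * d.2 = t * D) /\ ~ tri d /\
   exists e, tri e /\ near K (d.1 - e.1, d.2 - e.2)).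
Proof.
have HK : 1 <= K by rewrite /K; lia.
rewrite mem_s0; split.
  case=> j [Hj [|[|]] ->]; rewrite /tri /near /f1 /f2 /f3 /D /=.
  - split; first by exists 0; lia.
    split; first lia.
    exists (j%:Z*(3*K+1), 0) => /=; rewrite /K in HK *; split; nia.
  - split; first by exists (1 + 3 * j%:Z); nia.
    split; first lia.
    exists (D, j%:Z*(3*K+2)) => /=; rewrite /D /K in HK *; split; nia.
  - split; first by exists (3*K+2-3*j%:Z); nia.
    split; first (rewrite /K; nia).
    exists (D - j%:Z*(3*K+1), D - j%:Z*(3*K+1)) => /=; rewrite /D /K in HK *; split; nia.
case: d => a b /=; case=> [[t E] [Hnt [[ea eb] [Htri Hn]]]].
rewrite /tri /near /= in Hnt Htri Hn.
have Hb1 : -K <= b by lia.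
have Hb2 : b <= D + K by lia.
have Ha1 : -K <= a by lia.
have Ha2 : a <= D + K by lia.
case: (ltrP b 0) => Hb.
  have Ea := @case1 K a b t HK E Hb1 Hb (ltac:(rewrite /D in Ha2 *; lia)).
  exists (absz b); split; first lia.
  left; rewrite /f1 Ea; congr (_, _); lia.
case: (ltrP D a) => Ha.
  have Eb := @case2 K a b t HK E (ltac:(rewrite /D in Hb2 *; lia)) (ltac:(rewrite /D in Ha Ha2 *; lia)).
  exists (absz (a - D)); split; first (rewrite /D in Ha Ha2 *; lia).
  right; left; rewrite /f2 Eb /D; congr (_, _); lia.
have Hab : 1 <= b - a <= K by lia.
have Ea := @case3 K a b t HK E Ha Ha1 Hab.
exists (absz (b - a)); split; first lia.
right; right; rewrite /f3; congr (_, _); rewrite /D; lia.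
Qed.
End Core.

Lemma size_s0 k : size (s0 k) = (3 * k)%N.
Proof. rewrite /s0 !size_cat !size_map size_iota; lia. Qed.

Lemma uniq_s0 k : (1 <= k)%N -> uniq (s0 k).
Proof.
move=> hk; rewrite /s0 !cat_uniq !has_cat !map_inj_in_uniq ?iota_uniq.
- rewrite /f1 /f2 /f3 /= !andbT; apply/andP; split.
  + rewrite negb_or; apply/andP; split; apply/hasPn => p /mapP [j Hj ->]; apply/negP => /mapP [j' Hj' [E1 E2]];
    rewrite mem_iota in Hj Hj'; nia.
  + apply/hasPn => p /mapP [j Hj ->]; apply/negP => /mapP [j' Hj' [E1 E2]];
    rewrite mem_iota in Hj Hj'; nia.
- move=> x y Hx Hy [E1 E2]; rewrite mem_iota in Hx Hy; apply/eqP; nia.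
- move=> x y Hx Hy [E1 E2]; rewrite mem_iota in Hx Hy; apply/eqP; nia.
- move=> x y Hx Hy [E1 E2]; rewrite mem_iota in Hx Hy; apply/eqP; nia.
Qed.

Lemma distT_iff q p (n : nat) : distT_le q p n <-> near n%:Z (p.1 - q.1, p.2 - q.2).
Proof.
split.
  case=> s [Hs [Hp Hl]]; have := @path_near q s Hp; rewrite Hl /near /=; lia.
move=> H; have [s [H1 [H2 H3]]] := @near_path n q _ H; exists s; split => //; split => //.
rewrite H3 /vadd /=; case: p {H H3} => a b /=; congr (_, _); lia.
Qed.

Lemma inP_iff k p : inP k p <->
  exists t : int, p.1 + (3*k%:Z+1) * p.2 = t * (3*k%:Z*k%:Z+3*k%:Z+1).
Proof.
case: p => a b /=; split.
  case=> x [y [-> ->]]; exists (x + 2*y); nia.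
case=> t E; exists (t - 2*b + 2*k%:Z*t), (b - k%:Z*t).
have Ea : a = t * (3*k%:Z*k%:Z+3*k%:Z+1) - (3*k%:Z+1) * b by lia.
congr (_, _); rewrite ?Ea; nia.
Qed.

Lemma inDelta_iff k c p : inDelta k c p <-> tri k (p.1 - c.1, p.2 - c.2).
Proof.
rewrite /tri /=; split.
  case=> a [b [H1 [H2 ->]]]; rewrite /vadd /=; rewrite /Dk in H2; nia.
move=> H; exists (absz (p.1 - c.1)), (absz (p.2 - c.2)); split; first lia.
split; first (rewrite /Dk; nia).
rewrite /vadd; case: p H => a b /= H; congr (_, _); lia.
Qed.

Lemma vadd_inj c : injective (vadd c).
Proof. move=> [a b] [a' b'] []; rewrite /vadd /= => H1 H2; congr (_, _); lia. Qed.

Theorem lemma2 (k : nat) (hk : (1 <= k)%N) (c : vtx) (hc : inP k c) :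
  exists s : seq vtx,
    uniq s /\ size s = (3 * k)%N /\
    (forall p : vtx,
        p \in s <->
        (inP k p /\ ~ inDelta k c p /\
         exists q : vtx, inDelta k c q /\ distT_le q p k)).
Proof.
exists (map (vadd c) (s0 k)); split; first by rewrite (map_inj_uniq (@vadd_inj c)) uniq_s0.
split; first by rewrite size_map size_s0.
move=> p.
have Ep : p = vadd c (p.1 - c.1, p.2 - c.2).
  by case: p => a b; rewrite /vadd /=; congr (_, _); lia.
rewrite {1}Ep (mem_map (@vadd_inj c)) core //= inDelta_iff.
have [t0 Ec] := (inP_iff k c).1 hc.
split.
  case=> [[t Et] [Hnt [e [He Hn]]]]; split.
    apply/inP_iff; exists (t + t0); lia.
  split => //.
  exists (vadd c e); split.
    by apply/inDelta_iff; case: e He Hn => a b; rewrite /vadd /=;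
       rewrite (_ : c.1 + a - c.1 = a); [rewrite (_ : c.2 + b - c.2 = b) | ]; try lia.
  apply/distT_iff; move: Hn; rewrite /near /vadd /=; lia.
case=> HP [Hnt [q [Hq Hd]]]; split.
  have [t Et] := (inP_iff k p).1 HP; exists (t - t0); lia.
split => //.
exists (q.1 - c.1, q.2 - c.2); split; first by apply/inDelta_iff.
move: Hd => /distT_iff; rewrite /near /=; lia.
Qed.
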